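(* Let $p\ge1$ and $n>p$ be integers. Let $z$ be a real even eigenfunction of order $n$ with eigenvalue $\Lambda>0$, and write $$z=R+P,\qquad R(x)=\sum_{j=0}^{2p-1} r_j e^{i\lambda_j x},$$ where: - $\lambda_0,\dots,\lambda_{2p-1}$ are the distinct roots of $\lambda^{2p}=\Lambda$, and - $P$ is a polynomial. Then $R$ is even, so $R(x)=\rho(x^2)$ for a real-analytic function $\rho$. Moreover $$\rho^{(k)}(1)=0\qquad\text{for all }k\in\{n-p,\,n-p+1,\dots,n-1\}.$$
   Context: Fix an integer $p\ge1$. For an integer $k\ge p$ and real $\Lambda$, the differential operator on $[-1,1]$ is $$L^{2k}(\Lambda)=(-1)^k\frac{d^{2k}}{dx^{2k}}-\Lambda(-1)^{k-p}\frac{d^{2k-2p}}{dx^{2k-2p}}.$$ An eigenfunction of order $n$ with eigenvalue $\Lambda$ is a nonzero real $z\in C^{2n}[-1,1]$ such that: - $L^{2n}(\Lambda)z=0$ on $[-1,1]$, and - $z^{(j)}(\pm1)=0$ for $j=0,\dots,n-1$. Such $z$ is a linear combination of the exponentials $e^{i\lambda_j x}$ and a polynomial of degree at most $2n-2p-1$. *)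

(* Defs.v *)
From Stdlib Require Import Reals Lra Lia.
Open Scope R_scope.

Definition Cplx := (R * R)%type.
Definition Cadd (u v : Cplx) : Cplx := (fst u + fst v, snd u + snd v).
Definition Cmul (u v : Cplx) : Cplx :=
  (fst u * fst v - snd u * snd v, fst u * snd v + snd u * fst v).
Definition Cone : Cplx := (1, 0).
Definition Czero : Cplx := (0, 0).
Fixpoint Cpow (u : Cplx) (k : nat) : Cplx :=
  match k with O => Cone | S k' => Cmul u (Cpow u k') end.
Fixpoint Csum (f : nat -> Cplx) (m : nat) : Cplx :=
  match m with O => Czero | S m' => Cadd (Csum f m') (f m') end.
(** e^{i lam x} for lam = a + i b and real x:  = e^{-b x} (cos (a x) + i sin (a x)). *)
Definition Cexpi (lam : Cplx) (x : R) : Cplx :=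
  (exp (- snd lam * x) * cos (fst lam * x), exp (- snd lam * x) * sin (fst lam * x)).
Definition RtoC (t : R) : Cplx := (t, 0).

Definition Icl (x : R) : Prop := -1 <= x <= 1.

(** This encodes z in C^m[-1,1] with z^(k) = D k. *)
Definition Cm_derivs (z : R -> R) (m : nat) (D : nat -> R -> R) : Prop :=
  (forall x, Icl x -> D O x = z x) /\
  (forall k x, (k < m)%nat -> Icl x -> D_in (D k) (D (S k)) Icl x) /\
  (forall x, Icl x -> limit1_in (D m) Icl (D m x) x).

Definition eigenfunction (p nn : nat) (Lam : R) (z : R -> R) : Prop :=
  exists D : nat -> R -> R,
    Cm_derivs z (2 * nn) D /\
    (forall x, Icl x ->
       (-1) ^ nn * D (2 * nn)%nat x
       - Lam * (-1) ^ (nn - p) * D (2 * nn - 2 * p)%nat x = 0) /\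
    (forall j, (j < nn)%nat -> D j 1 = 0 /\ D j (-1) = 0) /\
    (exists x, Icl x /\ z x <> 0).

Definition real_analytic (f : R -> R) : Prop :=
  forall t0, exists r a, 0 < r /\
    forall t, Rabs (t - t0) < r -> Pser a (t - t0) (f t).

Definition all_derivs (f : R -> R) (D : nat -> R -> R) : Prop :=
  (forall x, D O x = f x) /\
  (forall k x, derivable_pt_lim (D k) x (D (S k) x)).

(* Main.v *)
From Coquelicot Require Import Coquelicot.
From Stdlib Require Import Reals Lra Lia FunctionalExtensionality Factorial List.
Require Import Defs.
Import ListNotations.
Open Scope R_scope.

Lemma Cext (u v : Cplx) : fst u = fst v -> snd u = snd v -> u = v.
Proof. destruct u, v; simpl; intros; subst; reflexivity. Qed.

Lemma Cmul_assoc u v w : Cmul u (Cmul v w) = Cmul (Cmul u v) w.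
Proof. apply Cext; unfold Cmul; simpl; ring. Qed.
Lemma Cmul_comm u v : Cmul u v = Cmul v u.
Proof. apply Cext; unfold Cmul; simpl; ring. Qed.
Lemma Cmul_addr u v w : Cmul u (Cadd v w) = Cadd (Cmul u v) (Cmul u w).
Proof. apply Cext; unfold Cmul, Cadd; simpl; ring. Qed.
Lemma Cmul_one u : Cmul u Cone = u.
Proof. apply Cext; unfold Cmul, Cone; simpl; ring. Qed.
Lemma Cmul_zero u : Cmul u Czero = Czero.
Proof. apply Cext; unfold Cmul, Czero; simpl; ring. Qed.
Lemma Cadd_zero u : Cadd u Czero = u.
Proof. apply Cext; unfold Cadd, Czero; simpl; ring. Qed.

Lemma Cpow_add u a b : Cpow u (a + b) = Cmul (Cpow u a) (Cpow u b).
Proof.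
  induction a; simpl. - rewrite Cmul_comm, Cmul_one. reflexivity.
  - rewrite IHa, Cmul_assoc. reflexivity.
Qed.
Lemma Cpow_mul u v k : Cpow (Cmul u v) k = Cmul (Cpow u k) (Cpow v k).
Proof.
  induction k; simpl. - apply Cext; unfold Cmul, Cone; simpl; ring.
  - rewrite IHk. apply Cext; unfold Cmul; simpl; ring.
Qed.
Lemma Cpow_pow u a b : Cpow u (a * b) = Cpow (Cpow u a) b.
Proof.
  revert a; induction b; intros a.
  - rewrite Nat.mul_0_r. reflexivity.
  - rewrite Nat.mul_succ_r, Cpow_add, IHb. simpl. apply Cmul_comm.
Qed.
Lemma Cpow_RtoC x k : Cpow (RtoC x) k = RtoC (x ^ k).
Proof.
  induction k; simpl. reflexivity. rewrite IHk. apply Cext; unfold Cmul, RtoC; simpl; ring.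
Qed.

Lemma Csum_ext f g m : (forall j, (j < m)%nat -> f j = g j) -> Csum f m = Csum g m.
Proof.
  induction m; simpl; intros H. reflexivity.
  rewrite IHm by (intros; apply H; lia). rewrite H by lia. reflexivity.
Qed.
Lemma Csum_fst f m : fst (Csum f m) = sum_f_R0 (fun j => fst (f j)) (pred m) * (if m then 0 else 1) .
Abort.
Fixpoint rsum (f : nat -> R) (m : nat) : R :=
  match m with O => 0 | S m' => rsum f m' + f m' end.
Lemma Csum_fst f m : fst (Csum f m) = rsum (fun j => fst (f j)) m.
Proof. induction m; simpl. reflexivity. rewrite IHm; reflexivity. Qed.
Lemma Csum_snd f m : snd (Csum f m) = rsum (fun j => snd (f j)) m.
Proof. induction m; simpl. reflexivity. rewrite IHm; reflexivity. Qed.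
Lemma Cmul_Csum u f m : Cmul u (Csum f m) = Csum (fun j => Cmul u (f j)) m.
Proof.
  induction m; simpl. apply Cmul_zero. rewrite Cmul_addr, IHm; reflexivity.
Qed.
Lemma Csum_add f g m : Csum (fun j => Cadd (f j) (g j)) m = Cadd (Csum f m) (Csum g m).
Proof.
  induction m; simpl. apply Cext; unfold Cadd, Czero; simpl; ring.
  rewrite IHm. apply Cext; unfold Cadd; simpl; ring.
Qed.
Lemma rsum_ext f g m : (forall j, (j < m)%nat -> f j = g j) -> rsum f m = rsum g m.
Proof.
  induction m; simpl; intros H. reflexivity.
  rewrite IHm by (intros; apply H; lia). rewrite H by lia. reflexivity.
Qed.
Lemma rsum_zero m : rsum (fun _ => 0) m = 0.
Proof. induction m; simpl; [reflexivity| rewrite IHm; ring]. Qed.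
Lemma rsum_single f m k : (forall j, j <> k -> f j = 0) ->
  rsum f m = if (k <? m)%nat then f k else 0.
Proof.
  intros H. induction m; simpl. reflexivity.
  rewrite IHm. destruct (Nat.eq_dec m k).
  - subst. rewrite Nat.ltb_irrefl. replace (k <? S k)%nat with true by (symmetry; apply Nat.ltb_lt; lia). ring.
  - rewrite (H m n). destruct (k <? m)%nat eqn:E.
    + apply Nat.ltb_lt in E. replace (k <? S m)%nat with true by (symmetry; apply Nat.ltb_lt; lia). ring.
    + apply Nat.ltb_ge in E. replace (k <? S m)%nat with false by (symmetry; apply Nat.ltb_ge; lia). ring.
Qed.
Lemma rsum_lin a b f g m : rsum (fun j => a * f j + b * g j) m = a * rsum f m + b * rsum g m.
Proof. induction m; simpl. ring. rewrite IHm; ring. Qed.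
Lemma rsum_scal a f m : rsum (fun j => a * f j) m = a * rsum f m.
Proof. induction m; simpl. ring. rewrite IHm; ring. Qed.
Lemma rsum_le f g m : (forall j, (j < m)%nat -> f j <= g j) -> rsum f m <= rsum g m.
Proof.
  induction m; simpl; intros H. lra.
  specialize (IHm (fun j Hj => H j ltac:(lia))). specialize (H m ltac:(lia)). lra.
Qed.
Lemma rsum_abs f m : Rabs (rsum f m) <= rsum (fun j => Rabs (f j)) m.
Proof.
  induction m; simpl. rewrite Rabs_R0; lra.
  eapply Rle_trans. apply Rabs_triang. lra.
Qed.

Definition chain (F : nat -> R -> R) := forall k x, derivable_pt_lim (F k) x (F (S k) x).

Lemma chain_offset F a : chain F -> chain (fun k => F (a + k)%nat).
Proof. intros H k x. replace (a + S k)%nat with (S (a + k)) by lia. apply H. Qed.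

Lemma chain_lin F G a b : chain F -> chain G -> chain (fun k x => a * F k x + b * G k x).
Proof.
  intros HF HG k x. apply derivable_pt_lim_plus; apply derivable_pt_lim_scal; auto.
Qed.

Lemma chain_ext F G : chain F -> (forall k x, F k x = G k x) -> chain G.
Proof.
  intros H E k x. assert (G k = F k) as -> by (apply functional_extensionality; intros; symmetry; apply E).
  rewrite <- E. apply H.
Qed.

Lemma chain_refl F : chain F -> chain (fun k x => (-1) ^ k * F k (- x)).
Proof.
  intros H k x. simpl.
  replace (-1 * (-1) ^ k * F (S k) (- x)) with ((-1) ^ k * (F (S k) (- x) * (-1))) by ring.
  apply derivable_pt_lim_scal.
  apply (derivable_pt_lim_comp (fun x => - x) (F k)).
  - replace (-1) with (- (1)) by ring. apply derivable_pt_lim_opp. apply derivable_pt_lim_id.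
  - apply H.
Qed.

Definition cchain (F : nat -> R -> Cplx) :=
  chain (fun k x => fst (F k x)) /\ chain (fun k x => snd (F k x)).

Lemma cchain_sum (F : nat -> nat -> R -> Cplx) m :
  (forall j, cchain (F j)) -> cchain (fun k x => Csum (fun j => F j k x) m).
Proof.
  intros H. induction m; simpl.
  - split; intros k x; simpl; apply derivable_pt_lim_const.
  - destruct IHm as [A B]. split; intros k x; simpl; apply derivable_pt_lim_plus.
    apply A. apply (proj1 (H m)). apply B. apply (proj2 (H m)).
Qed.

Lemma cchain_add F G : cchain F -> cchain G -> cchain (fun k x => Cadd (F k x) (G k x)).
Proof.
  intros [A B] [C D]. split; intros k x; simpl; apply derivable_pt_lim_plus; auto.
Qed.

Lemma cchain_scal u F : cchain F -> cchain (fun k x => Cmul u (F k x)).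
Proof.
  intros [A B]. unfold Cmul; split; intros k x; simpl.
  - apply derivable_pt_lim_minus; apply derivable_pt_lim_scal; auto.
  - apply derivable_pt_lim_plus; apply derivable_pt_lim_scal; auto.
Qed.

Lemma cchain_RtoC F : chain F -> cchain (fun k x => RtoC (F k x)).
Proof. intros A. split; intros k x; simpl. apply A. apply derivable_pt_lim_const. Qed.

Fixpoint ff (m k : nat) : R := match k with O => 1 | S k' => ff m k' * INR (m - k') end.
Definition Xm (m k : nat) (x : R) : R := ff m k * x ^ (m - k).

Lemma chain_Xm m : chain (Xm m).
Proof.
  intros k x. unfold Xm. simpl.
  replace (ff m k * INR (m - k) * x ^ (m - S k)) with (ff m k * (INR (m - k) * x ^ Init.Nat.pred (m - k))).
  apply derivable_pt_lim_scal. apply derivable_pt_lim_pow.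
  replace (m - S k)%nat with (Init.Nat.pred (m - k)) by lia. ring.
Qed.

Lemma ff_zero m k : (m < k)%nat -> ff m k = 0.
Proof.
  induction k; intros H. lia. simpl. destruct (Nat.eq_dec m k).
  subst. rewrite Nat.sub_diag. simpl. ring. rewrite IHk by lia. ring.
Qed.
Lemma ff_nz m k : (k <= m)%nat -> ff m k <> 0.
Proof.
  induction k; intros H; simpl. lra. apply Rmult_integral_contrapositive_currified.
  apply IHk; lia. apply not_0_INR; lia.
Qed.
Lemma Xm_0 m k : Xm m k 0 = if Nat.eqb m k then ff m m else 0.
Proof.
  unfold Xm. destruct (Nat.eqb_spec m k).
  - subst. rewrite Nat.sub_diag. simpl. ring.
  - destruct (Nat.lt_ge_cases m k). rewrite ff_zero by auto. ring.
    replace (m - k)%nat with (S (m - k - 1)) by lia. simpl. ring.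
Qed.
Lemma Xm_zero_k m k : (0 < k)%nat -> Xm m k 0 = 0 \/ m = k.
Abort.

Definition mu (l : Cplx) : Cplx := (- snd l, fst l).
Definition Ex (l : Cplx) (k : nat) (x : R) : Cplx := Cmul (Cpow (mu l) k) (Cexpi l x).

Lemma deriv_Cexpi l x :
  derivable_pt_lim (fun x => fst (Cexpi l x)) x (fst (Cmul (mu l) (Cexpi l x))) /\
  derivable_pt_lim (fun x => snd (Cexpi l x)) x (snd (Cmul (mu l) (Cexpi l x))).
Proof.
  destruct l as [a b]. unfold Cexpi, Cmul, mu; simpl. split; apply is_derive_Reals.
  - auto_derive; auto. ring.
  - auto_derive; auto. ring.
Qed.

Lemma cchain_Ex l : cchain (Ex l).
Proof.
  split; intros k x; unfold Ex; simpl Cpow;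
  destruct (deriv_Cexpi l x) as [A B]; set (u := Cpow (mu l) k).
  - replace (fst (Cmul (Cmul (mu l) u) (Cexpi l x))) with
      (fst u * fst (Cmul (mu l) (Cexpi l x)) - snd u * snd (Cmul (mu l) (Cexpi l x)))
      by (unfold Cmul; simpl; ring).
    unfold Cmul at 1; simpl.
    apply derivable_pt_lim_minus; apply derivable_pt_lim_scal; auto.
  - replace (snd (Cmul (Cmul (mu l) u) (Cexpi l x))) with
      (fst u * snd (Cmul (mu l) (Cexpi l x)) + snd u * fst (Cmul (mu l) (Cexpi l x)))
      by (unfold Cmul; simpl; ring).
    unfold Cmul at 1; simpl.
    apply derivable_pt_lim_plus; apply derivable_pt_lim_scal; auto.
Qed.

Definition lim_Icl (q : R -> R) (x L : R) :=
  forall eps, 0 < eps -> exists d, 0 < d /\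
    forall y, Icl y -> y <> x -> Rabs (y - x) < d -> Rabs (q y - L) < eps.

Lemma lim_Icl_unique q x L1 L2 : Icl x -> lim_Icl q x L1 -> lim_Icl q x L2 -> L1 = L2.
Proof.
  intros Hx H1 H2. destruct (Req_dec L1 L2) as [|Hne]; auto. exfalso.
  set (eps := Rabs (L1 - L2) / 2).
  assert (He : 0 < eps) by (unfold eps; assert (L1 - L2 <> 0) by lra; pose proof (Rabs_pos_lt _ H); lra).
  destruct (H1 eps He) as [d1 [Hd1 A]]. destruct (H2 eps He) as [d2 [Hd2 B]].
  assert (Hp : 0 < Rmin (Rmin d1 d2) 1) by (apply Rmin_pos; [apply Rmin_pos|]; lra).
  pose proof (Rmin_l (Rmin d1 d2) 1); pose proof (Rmin_r (Rmin d1 d2) 1);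
  pose proof (Rmin_l d1 d2); pose proof (Rmin_r d1 d2).
  set (m := Rmin (Rmin d1 d2) 1 / 2).
  assert (Hm : 0 < m) by (unfold m; lra).
  assert (Hm1 : m <= 1/2) by (unfold m; lra).
  assert (Hmd1 : m < d1) by (unfold m; lra).
  assert (Hmd2 : m < d2) by (unfold m; lra).
  unfold Icl in Hx.
  set (y := if Rle_dec x 0 then x + m else x - m).
  assert (Hy : Icl y /\ y <> x /\ Rabs (y - x) = m).
  { unfold y, Icl; destruct (Rle_dec x 0).
    - replace (x + m - x) with m by ring. rewrite Rabs_right by lra. repeat split; lra.
    - replace (x - m - x) with (- m) by ring. rewrite Rabs_Ropp, Rabs_right by lra. repeat split; lra. }
  destruct Hy as [Hy1 [Hy2 Hy3]].
  specialize (A y Hy1 Hy2 ltac:(lra)). specialize (B y Hy1 Hy2 ltac:(lra)).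
  assert (Rabs (L1 - L2) <= Rabs (q y - L1) + Rabs (q y - L2)).
  { replace (L1 - L2) with (- (q y - L1) + (q y - L2)) by ring.
    eapply Rle_trans. apply Rabs_triang. rewrite Rabs_Ropp. lra. }
  unfold eps in *. lra.
Qed.

Lemma deriv_lim_Icl f x l : derivable_pt_lim f x l ->
  lim_Icl (fun y => (f y - f x) / (y - x)) x l.
Proof.
  intros H eps He. destruct (H eps He) as [d Hd]. exists d. split. apply cond_pos.
  intros y _ Hyx Hy. specialize (Hd (y - x) ltac:(lra) Hy).
  replace (x + (y - x)) with y in Hd by ring. exact Hd.
Qed.

Lemma Din_lim_Icl f d x : D_in f d Icl x -> lim_Icl (fun y => (f y - f x) / (y - x)) x (d x).
Proof.
  intros H eps He. destruct (H eps He) as [a [Ha Hb]]. exists a. split; auto.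
  intros y Hy Hyx Hd. apply (Hb y). split. split; auto. simpl. unfold R_dist. exact Hd.
Qed.

Lemma lim_Icl_ext q1 q2 x L : (forall y, Icl y -> y <> x -> q1 y = q2 y) -> lim_Icl q1 x L -> lim_Icl q2 x L.
Proof.
  intros E H eps He. destruct (H eps He) as [d [Hd A]]. exists d; split; auto.
  intros y Hy Hyx Hyd. rewrite <- E by auto. apply A; auto.
Qed.

Lemma Icl_deriv_unique f g l1 l2 x : Icl x -> (forall y, Icl y -> f y = g y) ->
  derivable_pt_lim f x l1 -> derivable_pt_lim g x l2 -> l1 = l2.
Proof.
  intros Hx E A B. apply deriv_lim_Icl in A. apply deriv_lim_Icl in B.
  apply (lim_Icl_unique (fun y => (g y - g x) / (y - x)) x); auto.
  eapply lim_Icl_ext; [|exact A]. intros. simpl. rewrite !E by auto. reflexivity.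
Qed.

Lemma Din_unique f g d l x : Icl x -> (forall y, Icl y -> f y = g y) ->
  D_in f d Icl x -> derivable_pt_lim g x l -> d x = l.
Proof.
  intros Hx E A B. apply Din_lim_Icl in A. apply deriv_lim_Icl in B.
  apply (lim_Icl_unique (fun y => (g y - g x) / (y - x)) x); auto.
  eapply lim_Icl_ext; [|exact A]. intros. simpl. rewrite !E by auto. reflexivity.
Qed.

Lemma Estep (D : nat -> R -> R) (Z : nat -> R -> Cplx) m z :
  Cm_derivs z m D -> cchain Z -> (forall x, Icl x -> RtoC (z x) = Z 0%nat x) ->
  forall k, (k <= m)%nat -> forall x, Icl x -> RtoC (D k x) = Z k x.
Proof.
  intros [H0 [H1 _]] [Z1 Z2] Hz. induction k; intros Hk x Hx.
  - rewrite H0 by auto. auto.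
  - assert (IH : forall y, Icl y -> D k y = fst (Z k y) /\ 0 = snd (Z k y)).
    { intros y Hy. pose proof (IHk ltac:(lia) y Hy) as E. rewrite <- E. simpl. auto. }
    apply Cext; simpl.
    + apply (Din_unique (D k) (fun y => fst (Z k y)) (D (S k)) _ x Hx).
      intros; apply IH; auto. apply H1; auto; lia. apply Z1.
    + apply (Icl_deriv_unique (fun _ => 0) (fun y => snd (Z k y)) 0 _ x Hx).
      intros; apply IH; auto. apply derivable_pt_lim_const. apply Z2.
Qed.

Lemma deriv_local_ext f g x l d : 0 < d -> (forall y, Rabs (y - x) < d -> f y = g y) ->
  derivable_pt_lim f x l -> derivable_pt_lim g x l.
Proof.
  intros Hd E H eps He. destruct (H eps He) as [d1 Hd1].
  assert (Hm : 0 < Rmin d1 d) by (apply Rmin_pos; [apply cond_pos|lra]).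
  exists (mkposreal _ Hm). intros h Hh Hhd. simpl in Hhd.
  rewrite <- !E. apply Hd1; auto. eapply Rlt_le_trans; [exact Hhd| apply Rmin_l].
  replace (x - x) with 0 by ring. rewrite Rabs_R0; lra.
  replace (x + h - x) with h by ring. eapply Rlt_le_trans; [exact Hhd| apply Rmin_r].
Qed.

Lemma zero_chain F : chain F -> (forall x, -1 < x < 1 -> F 0%nat x = 0) ->
  forall k x, -1 < x < 1 -> F k x = 0.
Proof.
  intros HF H0 k. induction k; intros x Hx. auto.
  symmetry. apply (uniqueness_limite (F k) x 0).
  - apply (deriv_local_ext (fun _ => 0) _ x 0 (Rmin (x + 1) (1 - x))).
    apply Rmin_pos; lra.
    intros y Hy. symmetry. apply IHk.
    pose proof (Rmin_l (x+1) (1-x)); pose proof (Rmin_r (x+1) (1-x)).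
    apply Rabs_def2 in Hy. lra.
    apply derivable_pt_lim_const.
  - apply HF.
Qed.

Lemma chain_Derive_n G : chain G -> forall k t, Derive_n (G 0%nat) k t = G k t.
Proof.
  intros H k. induction k; intros t. reflexivity.
  simpl. rewrite (Derive_ext _ (G k) t IHk). apply is_derive_unique.
  apply is_derive_Reals. apply H.
Qed.

Lemma chain_ex_derive_n G : chain G -> forall k t, ex_derive_n (G 0%nat) k t.
Proof.
  intros H k t. destruct k. exact I. simpl.
  apply (ex_derive_ext (G k)). intros; symmetry; apply chain_Derive_n; auto.
  exists (G (S k) t). apply is_derive_Reals. apply H.
Qed.

Lemma infinite_sum_ext a b l : (forall n, a n = b n) -> infinite_sum a l -> infinite_sum b l.
Proof.
  intros E H eps He. destruct (H eps He) as [N HN]. exists N. intros n Hn.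
  rewrite <- (sum_eq a b n) by auto. apply HN; auto.
Qed.

Lemma Pser_zero a : Pser a 0 (a 0%nat).
Proof.
  intros eps He. exists 0%nat. intros n _.
  assert (sum_f_R0 (fun k => a k * 0 ^ k) n = a 0%nat).
  { induction n. simpl. ring. simpl. rewrite IHn. ring. }
  rewrite H. unfold R_dist. replace (a 0%nat - a 0%nat) with 0 by ring. rewrite Rabs_R0; lra.
Qed.

Lemma taylor_pos G x0 h e : chain G -> 0 < h -> Un_cv e 0 ->
  (forall k t, x0 <= t <= x0 + h -> Rabs (G k t) * h ^ k / INR (fact k) <= e k) ->
  Pser (fun k => G k x0 / INR (fact k)) h (G 0%nat (x0 + h)).
Proof.
  intros HG Hh He Hb eps Heps. destruct (He eps Heps) as [N HN]. exists N. intros n Hn.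
  destruct (Taylor_Lagrange (G 0%nat) n x0 (x0 + h) ltac:(lra)) as [zeta [Hz E]].
  { intros; apply chain_ex_derive_n; auto. }
  replace (x0 + h - x0) with h in E by ring.
  rewrite E. unfold R_dist.
  rewrite (sum_eq _ (fun m => h ^ m / INR (fact m) * Derive_n (G 0%nat) m x0)).
  2:{ intros i _. rewrite chain_Derive_n by auto. field. apply INR_fact_neq_0. }
  match goal with |- Rabs (?S - (?S + ?T)) < _ => replace (S - (S + T)) with (- T) by ring end.
  rewrite Rabs_Ropp. rewrite chain_Derive_n by auto.
  specialize (HN (S n) ltac:(lia)). unfold R_dist in HN. rewrite Rminus_0_r in HN.
  specialize (Hb (S n) zeta ltac:(lra)).
  eapply Rle_lt_trans; [|exact (Rle_lt_trans _ _ _ (Rle_abs _) HN)].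
  eapply Rle_trans; [|exact Hb].
  rewrite Rabs_mult, Rabs_div by apply INR_fact_neq_0.
  rewrite (Rabs_right (h ^ S n)) by (apply Rle_ge, pow_le; lra).
  rewrite (Rabs_right (INR (fact (S n)))) by (apply Rle_ge, pos_INR).
  right. field. apply INR_fact_neq_0.
Qed.

Lemma sgn_sq k : (-1) ^ k * (-1) ^ k = 1.
Proof. induction k; simpl. ring. replace (-1 * (-1) ^ k * (-1 * (-1) ^ k)) with ((-1) ^ k * (-1) ^ k) by ring. auto. Qed.

Lemma taylor_chain G x0 h e : chain G -> Un_cv e 0 ->
  (forall k t, Rmin x0 (x0 + h) <= t <= Rmax x0 (x0 + h) ->
     Rabs (G k t) * Rabs h ^ k / INR (fact k) <= e k) ->
  Pser (fun k => G k x0 / INR (fact k)) h (G 0%nat (x0 + h)).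
Proof.
  intros HG He Hb. destruct (Rtotal_order h 0) as [Hn|[Hz|Hp]].
  - pose proof (chain_refl G HG) as HG'.
    pose proof (taylor_pos _ (- x0) (- h) e HG' ltac:(lra) He) as T.
    simpl in T. replace (- (- x0 + - h)) with (x0 + h) in T by ring.
    rewrite Rmult_1_l in T.
    eapply infinite_sum_ext; [|apply T].
    + intros k. replace (- - x0) with x0 by ring.
      replace (- h) with (-1 * h) by ring. rewrite Rpow_mult_distr.
      pose proof (sgn_sq k) as S1. unfold Rdiv.
      replace ((-1) ^ k * G k x0 * / INR (fact k) * ((-1) ^ k * h ^ k)) with
        (((-1) ^ k * (-1) ^ k) * (G k x0 * / INR (fact k) * h ^ k)) by ring.
      rewrite S1. ring.
    + intros k t Ht. rewrite Rabs_mult, pow_1_abs, Rmult_1_l.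
      replace (- h) with (Rabs h) by (rewrite Rabs_left; auto).
      apply Hb. rewrite Rmin_right, Rmax_left by lra. lra.
  - subst. rewrite Rplus_0_r.
    replace (G 0%nat x0) with ((fun k => G k x0 / INR (fact k)) 0%nat) by (simpl; field).
    apply Pser_zero.
  - apply (taylor_pos G x0 h e); auto. intros k t Ht. rewrite <- (Rabs_right h) at 1 by lra.
    apply Hb. rewrite Rmin_left, Rmax_right by lra. lra.
Qed.

Definition chainU (a b : R) (F : nat -> R -> R) :=
  forall k x, a < x < b -> derivable_pt_lim (F k) x (F (S k) x).
Definition shiftc (F : nat -> R -> R) : nat -> R -> R := fun k => F (S k).

Section V.
Variables (a b t0 : R) (Hs : nat -> R -> R).
Hypothesis Hab : a < t0 < b.
Hypothesis HHs : chainU a b Hs.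

Definition prodL (gs : list (nat -> R -> R)) (t : R) : R :=
  fold_right (fun g acc => g 0%nat t * acc) 1 gs.
Definition Term := (list (nat -> R -> R) * (nat -> R -> R))%type.
Definition termv (tm : Term) (t : R) : R := prodL (fst tm) t * snd tm 0%nat (Hs 0%nat t).
Definition sumT (L : list Term) (t : R) : R := fold_right (fun tm acc => termv tm t + acc) 0 L.
Fixpoint dl (gs : list (nat -> R -> R)) : list (list (nat -> R -> R)) :=
  match gs with [] => [] | g :: gs' => (shiftc g :: gs') :: map (cons g) (dl gs') end.
Definition sumP (L : list (list (nat -> R -> R))) (t : R) : R :=
  fold_right (fun gs acc => prodL gs t + acc) 0 L.
Definition dterm (tm : Term) : list Term :=
  map (fun gs' => (gs', snd tm)) (dl (fst tm)) ++ [(shiftc Hs :: fst tm, shiftc (snd tm))].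

Lemma sumP_map_cons g L t : sumP (map (cons g) L) t = g 0%nat t * sumP L t.
Proof. induction L; simpl. ring. rewrite IHL. unfold prodL; simpl. ring. Qed.

Lemma d_prodL gs t : (forall g, In g gs -> chainU a b g) -> a < t < b ->
  derivable_pt_lim (prodL gs) t (sumP (dl gs) t).
Proof.
  intros Hg Ht. induction gs as [|g gs IH]; simpl.
  - apply derivable_pt_lim_const.
  - unfold sumP; simpl. fold (sumP (map (cons g) (dl gs)) t). rewrite sumP_map_cons.
    unfold prodL at 2; simpl. fold (prodL gs t).
    replace (g 1%nat t * prodL gs t + g 0%nat t * sumP (dl gs) t) with
      (g (S 0) t * prodL gs t + g 0%nat t * sumP (dl gs) t) by reflexivity.
    apply (derivable_pt_lim_mult (g 0%nat) (prodL gs)).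
    apply Hg; simpl; auto. apply IH. intros; apply Hg; simpl; auto.
Qed.

Lemma sumT_app L1 L2 t : sumT (L1 ++ L2) t = sumT L1 t + sumT L2 t.
Proof. induction L1; simpl. ring. rewrite IHL1; ring. Qed.

Lemma sumT_map L F t : sumT (map (fun gs' => (gs', F)) L) t = sumP L t * F 0%nat (Hs 0%nat t).
Proof. induction L; simpl. ring. rewrite IHL. unfold termv; simpl. ring. Qed.

Lemma d_term tm t : (forall g, In g (fst tm) -> chainU a b g) -> chain (snd tm) -> a < t < b ->
  derivable_pt_lim (termv tm) t (sumT (dterm tm) t).
Proof.
  intros Hg HF Ht. destruct tm as [gs F]. unfold dterm, termv; simpl.
  rewrite sumT_app, sumT_map. unfold sumT; simpl. unfold termv; simpl. unfold prodL at 2; simpl.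
  fold (prodL gs t). unfold shiftc.
  replace (sumP (dl gs) t * F 0%nat (Hs 0%nat t) + (Hs 1%nat t * prodL gs t * F 1%nat (Hs 0%nat t) + 0))
    with (sumP (dl gs) t * F 0%nat (Hs 0%nat t) + prodL gs t * (F 1%nat (Hs 0%nat t) * Hs 1%nat t)) by ring.
  apply (derivable_pt_lim_mult (prodL gs) (fun t => F 0%nat (Hs 0%nat t))).
  apply d_prodL; auto.
  apply (derivable_pt_lim_comp (Hs 0%nat) (F 0%nat)). apply HHs; auto. apply HF.
Qed.

Definition okT (m : nat) (tm : Term) :=
  (forall g, In g (fst tm) -> chainU a b g) /\ chain (snd tm) /\
  forall j, (j < m)%nat -> snd tm j (Hs 0%nat t0) = 0.

Lemma d_sumT L t : (forall tm, In tm L -> okT 0 tm) -> a < t < b ->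
  derivable_pt_lim (sumT L) t (sumT (flat_map dterm L) t).
Proof.
  intros HL Ht. induction L as [|tm L IH]; simpl.
  - apply derivable_pt_lim_const.
  - rewrite sumT_app. apply derivable_pt_lim_plus.
    destruct (HL tm (or_introl eq_refl)) as [A [B _]]. apply d_term; auto.
    apply IH. intros; apply HL; simpl; auto.
Qed.

Lemma dl_chains gs : (forall g, In g gs -> chainU a b g) ->
  forall gs', In gs' (dl gs) -> forall g, In g gs' -> chainU a b g.
Proof.
  induction gs as [|g0 gs IH]; simpl; intros H gs' Hin g Hg. contradiction.
  destruct Hin as [E|Hin].
  - subst. simpl in Hg. destruct Hg as [E|Hg].
    + subst. intros k x Hx. apply (H g0 (or_introl eq_refl) (S k) x Hx).
    + apply H; auto.
  - apply in_map_iff in Hin. destruct Hin as [gs'' [E Hin]]. subst. simpl in Hg.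
    destruct Hg as [E|Hg]. subst; apply H; auto.
    eapply IH; eauto.
Qed.

Lemma okT_dterm m tm : okT (S m) tm -> forall tm', In tm' (dterm tm) -> okT m tm'.
Proof.
  intros [A [B C]] tm' Hin. unfold dterm in Hin. apply in_app_or in Hin. destruct Hin as [Hin|Hin].
  - apply in_map_iff in Hin. destruct Hin as [gs' [E Hin]]. subst. split; [|split]; simpl.
    eapply dl_chains; eauto. auto. intros; apply C; lia.
  - simpl in Hin. destruct Hin as [E|[]]. subst. split; [|split]; simpl.
    + intros g [E|Hg]. subst. intros k x Hx. apply (HHs (S k) x Hx). auto.
    + intros k x. apply B.
    + intros j Hj. unfold shiftc. apply C. lia.
Qed.

Lemma sumT_t0_zero L : (forall tm, In tm L -> okT 1 tm) -> sumT L t0 = 0.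
Proof.
  induction L as [|tm L IH]; simpl; intros H. reflexivity.
  rewrite IH by (intros; apply H; auto). unfold termv.
  destruct (H tm (or_introl eq_refl)) as [_ [_ C]]. rewrite C by lia. ring.
Qed.

Lemma okT_weak m m' tm : (m' <= m)%nat -> okT m tm -> okT m' tm.
Proof. intros Hm [A [B C]]. split; [|split]; auto. intros; apply C; lia. Qed.

Lemma Vlem : forall m L Y, (forall tm, In tm L -> okT m tm) -> chainU a b Y ->
  (forall t, a < t < b -> Y 0%nat t = sumT L t) -> forall j, (j < m)%nat -> Y j t0 = 0.
Proof.
  induction m; intros L Y HL HY HE j Hj. lia.
  destruct j.
  - rewrite HE by auto. apply sumT_t0_zero. intros; eapply okT_weak; [|apply HL; eauto]. lia.
  - apply (IHm (flat_map dterm L) (shiftc Y)); [ | | | lia].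
    + intros tm' Hin. apply in_flat_map in Hin. destruct Hin as [tm [Hin1 Hin2]].
      eapply okT_dterm; eauto.
    + intros k x Hx. apply HY; auto.
    + intros t Ht. unfold shiftc. symmetry.
      apply (uniqueness_limite (sumT L) t).
      * apply d_sumT; auto. intros; eapply okT_weak; [|apply HL; eauto]. lia.
      * apply (deriv_local_ext (Y 0%nat) _ t _ (Rmin (t - a) (b - t))).
        apply Rmin_pos; lra.
        intros y Hy. apply HE. pose proof (Rmin_l (t - a) (b - t)); pose proof (Rmin_r (t - a) (b - t)).
        apply Rabs_def2 in Hy. lra.
        apply HY; auto.
Qed.
End V.

Definition n1 (u : Cplx) := Rabs (fst u) + Rabs (snd u).
Lemma n1_pos u : 0 <= n1 u.
Proof. unfold n1; pose proof (Rabs_pos (fst u)); pose proof (Rabs_pos (snd u)); lra. Qed.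
Lemma n1_fst u : Rabs (fst u) <= n1 u.
Proof. unfold n1; pose proof (Rabs_pos (snd u)); lra. Qed.
Lemma n1_snd u : Rabs (snd u) <= n1 u.
Proof. unfold n1; pose proof (Rabs_pos (fst u)); lra. Qed.
Lemma n1_add u v : n1 (Cadd u v) <= n1 u + n1 v.
Proof.
  unfold n1, Cadd; simpl. pose proof (Rabs_triang (fst u) (fst v)).
  pose proof (Rabs_triang (snd u) (snd v)). lra.
Qed.
Lemma n1_mul u v : n1 (Cmul u v) <= n1 u * n1 v.
Proof.
  unfold n1, Cmul; simpl. destruct u as [a b], v as [c d]; simpl.
  pose proof (Rabs_triang (a * c) (- (b * d))). pose proof (Rabs_triang (a * d) (b * c)).
  unfold Rminus. rewrite Rabs_Ropp in H. rewrite !Rabs_mult in *.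
  replace ((Rabs a + Rabs b) * (Rabs c + Rabs d)) with
    ((Rabs a * Rabs c + Rabs b * Rabs d) + (Rabs a * Rabs d + Rabs b * Rabs c)) by ring.
  lra.
Qed.
Lemma n1_pow u k : n1 (Cpow u k) <= n1 u ^ k.
Proof.
  induction k; simpl. unfold n1, Cone; simpl. rewrite Rabs_R1, Rabs_R0; lra.
  eapply Rle_trans. apply n1_mul. apply Rmult_le_compat_l. apply n1_pos. auto.
Qed.
Lemma n1_sum f m : n1 (Csum f m) <= rsum (fun j => n1 (f j)) m.
Proof.
  induction m; simpl. unfold n1, Czero; simpl. rewrite Rabs_R0; lra.
  eapply Rle_trans. apply n1_add. lra.
Qed.
Lemma n1_Cexpi l x : n1 (Cexpi l x) <= 2 * exp (Rabs (snd l) * Rabs x).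
Proof.
  unfold n1, Cexpi; simpl. rewrite !Rabs_mult.
  rewrite (Rabs_right (exp _)) by (apply Rle_ge, Rlt_le, exp_pos).
  assert (exp (- snd l * x) <= exp (Rabs (snd l) * Rabs x)).
  { destruct (Req_dec (- snd l * x) (Rabs (snd l) * Rabs x)) as [E|E]. rewrite E; lra.
    left; apply exp_increasing. rewrite <- Rabs_mult.
    pose proof (Rle_abs (- snd l * x)). rewrite Rabs_mult, Rabs_Ropp in H. rewrite Rabs_mult. lra. }
  pose proof (exp_pos (- snd l * x)).
  pose proof (COS_bound (fst l * x)). pose proof (SIN_bound (fst l * x)).
  assert (Rabs (cos (fst l * x)) <= 1) by (apply Rabs_le; lra).
  assert (Rabs (sin (fst l * x)) <= 1) by (apply Rabs_le; lra).
  pose proof (Rabs_pos (cos (fst l * x))); pose proof (Rabs_pos (sin (fst l * x))).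
  assert (exp (- snd l * x) * Rabs (cos (fst l * x)) <= exp (Rabs (snd l) * Rabs x) * 1)
    by (apply Rmult_le_compat; lra).
  assert (exp (- snd l * x) * Rabs (sin (fst l * x)) <= exp (Rabs (snd l) * Rabs x) * 1)
    by (apply Rmult_le_compat; lra).
  lra.
Qed.

Lemma rsum_nonneg f m : (forall j, 0 <= f j) -> 0 <= rsum f m.
Proof. intros H; induction m; simpl. lra. specialize (H m). lra. Qed.
Lemma rsum_term f m j : (forall j, 0 <= f j) -> (j < m)%nat -> f j <= rsum f m.
Proof.
  intros H Hj. induction m; simpl. lia.
  destruct (Nat.eq_dec j m). subst. pose proof (rsum_nonneg f m H). lra.
  pose proof (IHm ltac:(lia)). specialize (H m). lra.
Qed.

Lemma term_le_sum f m : (forall i, 0 <= f i) -> f m <= sum_f_R0 f m.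
Proof.
  intros H. destruct m. simpl; lra. rewrite tech5. pose proof (cond_pos_sum f m H). lra.
Qed.

Lemma pow_fact_le_exp X m : 0 <= X -> X ^ m / INR (fact m) <= exp X.
Proof.
  intros HX. pose proof (proj2_sig (exist_exp X)) as E. simpl in E. fold (exp X) in E.
  assert (Hp : forall i, 0 <= / INR (fact i) * X ^ i).
  { intros i. apply Rmult_le_pos. apply Rlt_le, Rinv_0_lt_compat, INR_fact_lt_0. apply pow_le; auto. }
  eapply Rle_trans; [|apply (sum_incr (fun i => / INR (fact i) * X ^ i) m); auto].
  eapply Rle_trans; [|apply (term_le_sum (fun i => / INR (fact i) * X ^ i)); auto].
  unfold Rdiv; right; ring.
Qed.

Lemma Un_cv_scal a e : Un_cv e 0 -> Un_cv (fun k => a * e k) 0.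
Proof.
  intros H. replace 0 with (a * 0) by ring. apply CV_mult; auto.
  intros eps He. exists 0%nat. intros. unfold R_dist. replace (a - a) with 0 by ring. rewrite Rabs_R0; lra.
Qed.

Lemma chain_rsum (al : nat -> R) (F : nat -> nat -> R -> R) m :
  (forall i, chain (F i)) -> chain (fun k x => rsum (fun i => al i * F i k x) m).
Proof.
  intros H. induction m; intros k x; simpl. apply derivable_pt_lim_const.
  apply derivable_pt_lim_plus. apply IHm. apply derivable_pt_lim_scal. apply H.
Qed.


Fixpoint cs (k : nat) : R := match k with O => 1 | S k' => cs k' * (/2 - INR k') end.
Definition Hsq (k : nat) (t : R) : R := cs k * sqrt t * (/ t) ^ k.

Lemma chain_Hsq : chainU 0 2 Hsq.
Proof.
  intros k t Ht. unfold Hsq. simpl cs.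
  assert (St : 0 < sqrt t) by (apply sqrt_lt_R0; lra).
  assert (E2 : sqrt t * sqrt t = t) by (apply sqrt_sqrt; lra).
  apply is_derive_Reals. auto_derive. repeat split; lra.
  assert (I2 : / (2 * sqrt t) = sqrt t / (2 * t)).
  { replace (sqrt t / (2 * t)) with (sqrt t / (2 * (sqrt t * sqrt t))) by (rewrite E2; reflexivity).
    field. lra. }
  rewrite I2. destruct k as [|k].
  - simpl. field. lra.
  - simpl Init.Nat.pred. rewrite S_INR. simpl pow. field. lra.
Qed.

Lemma fst_RtoC_mul a u : fst (Cmul (RtoC a) u) = a * fst u.
Proof. unfold Cmul, RtoC; simpl; ring. Qed.
Lemma snd_RtoC_mul a u : snd (Cmul (RtoC a) u) = a * snd u.
Proof. unfold Cmul, RtoC; simpl; ring. Qed.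
Lemma fst_mul_RtoC u a : fst (Cmul u (RtoC a)) = fst u * a.
Proof. unfold Cmul, RtoC; simpl; ring. Qed.
Lemma snd_mul_RtoC u a : snd (Cmul u (RtoC a)) = snd u * a.
Proof. unfold Cmul, RtoC; simpl; ring. Qed.

Section Main.
Variables (p n : nat) (Lam : R) (z : R -> R) (lam : nat -> Cplx) (r : nat -> Cplx)
  (N : nat) (c : nat -> Cplx) (D : nat -> R -> R).
Hypothesis Hp : (1 <= p)%nat.
Hypothesis Hn : (p < n)%nat.
Hypothesis HL : 0 < Lam.
Hypothesis HD : Cm_derivs z (2 * n) D.
Hypothesis Hode : forall x, Icl x ->
  (-1) ^ n * D (2 * n)%nat x - Lam * (-1) ^ (n - p) * D (2 * n - 2 * p)%nat x = 0.
Hypothesis Hbc : forall j, (j < n)%nat -> D j 1 = 0 /\ D j (-1) = 0.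
Hypothesis Heven : forall x, Icl x -> z (- x) = z x.
Hypothesis Hroots : forall j, (j < 2 * p)%nat -> Cpow (lam j) (2 * p) = RtoC Lam.
Hypothesis Hz : forall x, Icl x ->
  RtoC (z x) = Cadd (Csum (fun j => Cmul (r j) (Cexpi (lam j) x)) (2 * p))
                    (Csum (fun k => Cmul (c k) (RtoC (x ^ k))) N).

Definition RR k x := Csum (fun j => Cmul (r j) (Ex (lam j) k x)) (2 * p).
Definition PP k x := Csum (fun m => Cmul (c m) (RtoC (Xm m k x))) N.
Definition Z k x := Cadd (RR k x) (PP k x).

Lemma cchain_RR : cchain RR.
Proof. apply cchain_sum. intros j; apply cchain_scal, cchain_Ex. Qed.
Lemma cchain_Z : cchain Z.
Proof.
  apply cchain_add. apply cchain_RR.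
  apply cchain_sum; intros m; apply cchain_scal, cchain_RtoC, chain_Xm.
Qed.

Lemma RR0 x : RR 0 x = Csum (fun j => Cmul (r j) (Cexpi (lam j) x)) (2 * p).
Proof.
  unfold RR, Ex; apply Csum_ext; intros j _. simpl Cpow. rewrite (Cmul_comm Cone), Cmul_one. reflexivity.
Qed.
Lemma PP0 x : PP 0 x = Csum (fun k => Cmul (c k) (RtoC (x ^ k))) N.
Proof.
  unfold PP, Xm; apply Csum_ext; intros m _. simpl ff. rewrite Nat.sub_0_r, Rmult_1_l. reflexivity.
Qed.
Lemma Z0 x : Icl x -> RtoC (z x) = Z 0 x.
Proof. intros Hx. rewrite Hz by auto. unfold Z. rewrite RR0, PP0. reflexivity. Qed.

Definition s k := Csum (fun j => Cmul (r j) (Cpow (mu (lam j)) k)) (2 * p).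
Lemma Cexpi0 l : Cexpi l 0 = Cone.
Proof. unfold Cexpi, Cone. rewrite !Rmult_0_r, exp_0, cos_0, sin_0. apply Cext; simpl; ring. Qed.
Lemma RR_0 k : RR k 0 = s k.
Proof. unfold RR, s, Ex. apply Csum_ext; intros. rewrite Cexpi0, Cmul_one. reflexivity. Qed.

Definition cc k := if (k <? N)%nat then c k else Czero.
Lemma cc_big k : (N <= k)%nat -> cc k = Czero.
Proof. intros H. unfold cc. replace (k <? N)%nat with false by (symmetry; apply Nat.ltb_ge; lia). auto. Qed.

Lemma PP_0_gen (f : Cplx -> R) (Hf : forall u a, f (Cmul u (RtoC a)) = f u * a) k :
  f (PP k 0) = f (cc k) * ff k k -> True.
Proof. auto. Qed.

Lemma PP_0_fst k : fst (PP k 0) = fst (cc k) * ff k k.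
Proof.
  unfold PP. rewrite Csum_fst.
  rewrite (rsum_ext _ (fun m => fst (c m) * Xm m k 0)) by (intros; apply fst_mul_RtoC).
  rewrite (rsum_single _ _ k).
  - unfold cc. rewrite Xm_0, Nat.eqb_refl. destruct (k <? N)%nat; simpl; ring.
  - intros j Hj. rewrite Xm_0. apply Nat.eqb_neq in Hj. rewrite Hj. ring.
Qed.
Lemma PP_0_snd k : snd (PP k 0) = snd (cc k) * ff k k.
Proof.
  unfold PP. rewrite Csum_snd.
  rewrite (rsum_ext _ (fun m => snd (c m) * Xm m k 0)) by (intros; apply snd_mul_RtoC).
  rewrite (rsum_single _ _ k).
  - unfold cc. rewrite Xm_0, Nat.eqb_refl. destruct (k <? N)%nat; simpl; ring.
  - intros j Hj. rewrite Xm_0. apply Nat.eqb_neq in Hj. rewrite Hj. ring.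
Qed.
Lemma Z_0_fst k : fst (Z k 0) = fst (s k) + fst (cc k) * ff k k.
Proof. unfold Z, Cadd; simpl. rewrite RR_0, PP_0_fst. reflexivity. Qed.
Lemma Z_0_snd k : snd (Z k 0) = snd (s k) + snd (cc k) * ff k k.
Proof. unfold Z, Cadd; simpl. rewrite RR_0, PP_0_snd. reflexivity. Qed.

Definition alpha := (-1) ^ p * Lam.
Lemma alpha_nz : alpha <> 0.
Proof. unfold alpha. apply Rmult_integral_contrapositive_currified. apply pow_nonzero; lra. lra. Qed.

Lemma mu_eq l : mu l = Cmul (0, 1) l.
Proof. unfold mu, Cmul; destruct l; simpl; apply Cext; simpl; ring. Qed.
Lemma mupow j : (j < 2 * p)%nat -> Cpow (mu (lam j)) (2 * p) = RtoC alpha.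
Proof.
  intros Hj. rewrite mu_eq, Cpow_mul, Hroots by auto. rewrite Cpow_pow.
  replace (Cpow (0, 1) 2) with (RtoC (-1)) by (apply Cext; simpl; ring).
  rewrite Cpow_RtoC. unfold alpha. apply Cext; unfold Cmul, RtoC; simpl; ring.
Qed.
Lemma s_rec k : s (k + 2 * p) = Cmul (RtoC alpha) (s k).
Proof.
  unfold s. rewrite Cmul_Csum. apply Csum_ext; intros j Hj.
  rewrite Cpow_add, mupow by auto. apply Cext; unfold Cmul, RtoC; simpl; ring.
Qed.
Lemma s_rec_iter k t : s (k + 2 * p * t) = Cmul (RtoC (alpha ^ t)) (s k).
Proof.
  induction t.
  - rewrite Nat.mul_0_r, Nat.add_0_r. apply Cext; unfold Cmul, RtoC; simpl; ring.
  - replace (k + 2 * p * S t)%nat with ((k + 2 * p * t) + 2 * p)%nat by lia.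
    rewrite s_rec, IHt. apply Cext; unfold Cmul, RtoC; simpl; ring.
Qed.

Lemma snd_Z_0 k : snd (Z k 0) = 0.
Proof.
  apply (zero_chain (fun k x => snd (Z k x)) (proj2 cchain_Z)); [|lra].
  intros x Hx. rewrite <- Z0 by (unfold Icl; lra). reflexivity.
Qed.
Lemma snd_s k : snd (s k) = 0.
Proof.
  assert (HN: (N <= k + 2 * p * N)%nat) by (pose proof (Nat.mul_le_mono_r 1 p N Hp); lia).
  pose proof (snd_Z_0 (k + 2 * p * N)) as H. rewrite Z_0_snd, cc_big in H by exact HN.
  simpl in H. rewrite s_rec_iter, snd_RtoC_mul in H.
  assert (alpha ^ N * snd (s k) = 0) by lra.
  apply Rmult_integral in H0. destruct H0; auto. exfalso. apply (pow_nonzero alpha N alpha_nz H0).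
Qed.

Lemma fst_Z_odd i : fst (Z (2 * i + 1) 0) = 0.
Proof.
  pose proof (chain_lin _ _ 1 (-1) (proj1 cchain_Z) (chain_refl _ (proj1 cchain_Z))) as HG.
  pose proof (zero_chain _ HG) as Zc. simpl in Zc.
  assert (H0 : forall x, -1 < x < 1 -> 1 * fst (Z 0 x) + -1 * (1 * fst (Z 0 (- x))) = 0).
  { intros x Hx. rewrite <- !Z0 by (unfold Icl; lra). simpl. rewrite Heven by (unfold Icl; lra). ring. }
  specialize (Zc H0 (2 * i + 1)%nat 0 ltac:(lra)). rewrite Ropp_0 in Zc.
  replace (2 * i + 1)%nat with (S (2 * i)) in Zc by lia. rewrite pow_1_odd in Zc.
  replace (2 * i + 1)%nat with (S (2 * i)) by lia. unfold Z, Cadd. cbn [fst snd]. lra.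
Qed.
Lemma fst_s_odd i : fst (s (2 * i + 1)) = 0.
Proof.
  pose proof (fst_Z_odd (i + p * N)) as H.
  replace (2 * (i + p * N) + 1)%nat with ((2 * i + 1) + 2 * p * N)%nat in H by lia.
  assert (HN: (N <= 2 * i + 1 + 2 * p * N)%nat) by (pose proof (Nat.mul_le_mono_r 1 p N Hp); lia).
  rewrite Z_0_fst, cc_big in H by exact HN. unfold Czero in H; cbn [fst snd] in H.
  rewrite s_rec_iter, fst_RtoC_mul in H.
  assert (alpha ^ N * fst (s (2 * i + 1)) = 0) by lra.
  apply Rmult_integral in H0. destruct H0; auto. exfalso. apply (pow_nonzero alpha N alpha_nz H0).
Qed.
Lemma fst_cc_odd i : fst (cc (2 * i + 1)) = 0.
Proof.
  pose proof (fst_Z_odd i) as H. rewrite Z_0_fst, fst_s_odd in H.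
  assert (fst (cc (2 * i + 1)) * ff (2 * i + 1) (2 * i + 1) = 0) by lra.
  apply Rmult_integral in H0. destruct H0; auto. exfalso. apply (ff_nz _ _ (le_n _) H0).
Qed.

Lemma ode_chain k : (-1) ^ n * fst (Z (2 * n + k) 0) + - (Lam * (-1) ^ (n - p)) * fst (Z (2 * n - 2 * p + k) 0) = 0.
Proof.
  pose proof (chain_lin _ _ ((-1) ^ n) (- (Lam * (-1) ^ (n - p)))
     (chain_offset _ (2 * n) (proj1 cchain_Z)) (chain_offset _ (2 * n - 2 * p) (proj1 cchain_Z))) as HG.
  apply (zero_chain _ HG); [|lra]. intros x Hx. cbv beta. rewrite !Nat.add_0_r.
  assert (Icl x) by (unfold Icl; lra).
  pose proof (Estep D Z (2 * n) z HD cchain_Z Z0 (2 * n) (le_n _) x H) as E1.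
  pose proof (Estep D Z (2 * n) z HD cchain_Z Z0 (2 * n - 2 * p) ltac:(lia) x H) as E2.
  rewrite <- E1, <- E2. unfold RtoC; cbn [fst]. pose proof (Hode x H). lra.
Qed.

Lemma sgn_alpha : (-1) ^ n * alpha = Lam * (-1) ^ (n - p).
Proof.
  unfold alpha. replace n with ((n - p) + p)%nat at 1 by lia. rewrite pow_add.
  replace ((-1) ^ (n - p) * (-1) ^ p * ((-1) ^ p * Lam)) with (((-1) ^ p * (-1) ^ p) * (Lam * (-1) ^ (n - p))) by ring.
  rewrite sgn_sq. ring.
Qed.

Lemma cc_step m : (2 * n - 2 * p <= m)%nat -> fst (cc (m + 2 * p)) = 0 -> fst (cc m) = 0.
Proof.
  intros Hm H. pose proof (ode_chain (m - (2 * n - 2 * p))) as E.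
  replace (2 * n + (m - (2 * n - 2 * p)))%nat with (m + 2 * p)%nat in E by lia.
  replace (2 * n - 2 * p + (m - (2 * n - 2 * p)))%nat with m in E by lia.
  rewrite !Z_0_fst, H, s_rec, fst_RtoC_mul in E.
  assert (E' : fst (cc m) * (Lam * (-1) ^ (n - p) * ff m m) = 0).
  { rewrite <- sgn_alpha. rewrite <- sgn_alpha in E. lra. }
  apply Rmult_integral in E'. destruct E' as [E'|E']; auto. exfalso.
  apply Rmult_integral in E'. destruct E' as [E'|E'].
  apply Rmult_integral in E'. destruct E' as [E'|E']. lra. apply (pow_nonzero (-1) (n - p)); lra.
  apply (ff_nz m m (le_n _) E').
Qed.

Lemma fst_cc_high m : (2 * n - 2 * p <= m)%nat -> fst (cc m) = 0.
Proof.
  intros Hm. assert (forall d m, (2 * n - 2 * p <= m)%nat -> (N <= m + 2 * p * d)%nat -> fst (cc m) = 0).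
  { induction d; intros m' H1 H2.
    - rewrite cc_big by lia. reflexivity.
    - apply cc_step; auto. apply IHd. lia. lia. }
  apply (H N); auto. pose proof (Nat.mul_le_mono_r 1 p N Hp); lia.
Qed.


Definition Kc := rsum (fun j => n1 (mu (lam j))) (2 * p).
Definition Sc := rsum (fun j => n1 (r j)) (2 * p).
Definition Bc := rsum (fun j => Rabs (snd (lam j))) (2 * p).
Lemma Kc_pos : 0 <= Kc.
Proof. apply rsum_nonneg; intros; apply n1_pos. Qed.
Lemma Sc_pos : 0 <= Sc.
Proof. apply rsum_nonneg; intros; apply n1_pos. Qed.

Lemma exp_le' a b : a <= b -> exp a <= exp b.
Proof. intros H. destruct (Rle_lt_or_eq_dec _ _ H). left; apply exp_increasing; auto. subst; lra. Qed.

Lemma n1_RR k x T : Rabs x <= T -> n1 (RR k x) <= (Sc * (2 * exp (Bc * T))) * Kc ^ k.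
Proof.
  intros HT. unfold RR. eapply Rle_trans. apply n1_sum.
  apply Rle_trans with (rsum (fun j => (2 * exp (Bc * T) * Kc ^ k) * n1 (r j)) (2 * p)).
  - apply rsum_le. intros j Hj. eapply Rle_trans. apply n1_mul.
    rewrite Rmult_comm. apply Rmult_le_compat_r. apply n1_pos.
    unfold Ex. eapply Rle_trans. apply n1_mul. rewrite Rmult_comm.
    apply Rmult_le_compat. apply n1_pos. apply n1_pos.
    + eapply Rle_trans. apply n1_Cexpi. apply Rmult_le_compat_l. lra. apply exp_le'.
      apply Rmult_le_compat. apply Rabs_pos. apply Rabs_pos.
      unfold Bc. apply (rsum_term (fun j => Rabs (snd (lam j)))). intros; apply Rabs_pos. auto. auto.
    + eapply Rle_trans. apply n1_pow. apply pow_incr. split. apply n1_pos.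
      unfold Kc. apply (rsum_term (fun j => n1 (mu (lam j)))). intros; apply n1_pos. auto.
  - rewrite rsum_scal. unfold Sc. right; ring.
Qed.

Lemma between_abs a h t : Rmin a (a + h) <= t <= Rmax a (a + h) -> Rabs (t - a) <= Rabs h.
Proof.
  intros Ht. destruct (Rle_dec 0 h).
  - rewrite Rmin_left, Rmax_right in Ht by lra. rewrite !Rabs_right by lra. lra.
  - rewrite Rmin_right, Rmax_left in Ht by lra. rewrite (Rabs_left h) by lra.
    rewrite Rabs_left1 by lra. lra.
Qed.

Lemma Pser_RR (f : Cplx -> R) (Hf : forall u, Rabs (f u) <= n1 u) x
  (Hc : chain (fun k x => f (RR k x))) :
  Pser (fun k => f (s k) / INR (fact k)) x (f (RR 0 x)).
Proof.
  set (M := Sc * (2 * exp (Bc * Rabs x))).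
  pose proof (taylor_chain (fun k x => f (RR k x)) 0 x (fun k => M * ((Kc * Rabs x) ^ k / INR (fact k))) Hc) as T.
  rewrite Rplus_0_l in T. eapply infinite_sum_ext; [|apply T].
  - intros k. simpl. rewrite RR_0. reflexivity.
  - apply Un_cv_scal, cv_speed_pow_fact.
  - intros k t Ht0. pose proof (between_abs 0 x t) as Ht. rewrite Rplus_0_l, Rminus_0_r in Ht.
    specialize (Ht Ht0).
    pose proof (Hf (RR k t)). pose proof (n1_RR k t (Rabs x) Ht).
    rewrite Rpow_mult_distr. unfold Rdiv.
    assert (0 <= Rabs x ^ k * / INR (fact k)).
    { apply Rmult_le_pos. apply pow_le, Rabs_pos. apply Rlt_le, Rinv_0_lt_compat, INR_fact_lt_0. }
    replace (M * (Kc ^ k * Rabs x ^ k * / INR (fact k))) with ((M * Kc ^ k) * (Rabs x ^ k * / INR (fact k))) by ring.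
    rewrite Rmult_assoc. apply Rmult_le_compat_r; auto. unfold M. lra.
Qed.

Lemma sum_zero n0 : sum_f_R0 (fun _ => 0) n0 = 0.
Proof. induction n0; simpl. auto. rewrite IHn0; ring. Qed.
Lemma infinite_sum_zero : infinite_sum (fun _ => 0) 0.
Proof.
  intros eps He. exists 0%nat. intros. rewrite sum_zero. unfold R_dist. rewrite Rminus_0_r, Rabs_R0; lra.
Qed.

Lemma Rf_snd x : snd (RR 0 x) = 0.
Proof.
  pose proof (Pser_RR snd n1_snd x (proj2 cchain_RR)) as H.
  apply (uniqueness_sum (fun _ => 0)); [|apply infinite_sum_zero].
  eapply infinite_sum_ext; [|exact H]. intros k; simpl. rewrite snd_s. unfold Rdiv; ring.
Qed.

Lemma Rf_even x : RR 0 (- x) = RR 0 x.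
Proof.
  apply Cext; [|rewrite !Rf_snd; auto].
  pose proof (Pser_RR fst n1_fst x (proj1 cchain_RR)) as H1.
  pose proof (Pser_RR fst n1_fst (- x) (proj1 cchain_RR)) as H2.
  apply (uniqueness_sum (fun k => fst (s k) / INR (fact k) * x ^ k)); auto.
  eapply infinite_sum_ext; [|exact H2]. intros k. simpl.
  destruct (Nat.Even_or_Odd k) as [[i Hi]|[i Hi]]; subst.
  - rewrite !pow_mult. replace ((- x) ^ 2) with (x ^ 2) by ring. reflexivity.
  - rewrite fst_s_odd. unfold Rdiv; ring.
Qed.

Definition acoef m := fst (s (2 * m)) / INR (fact (2 * m)).

Lemma partial_rho x m : sum_f_R0 (fun i => acoef i * (x ^ 2) ^ i) m =
  sum_f_R0 (fun k => fst (s k) / INR (fact k) * x ^ k) (2 * m + 1).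
Proof.
  induction m.
  - simpl. pose proof (fst_s_odd 0) as H. simpl in H. rewrite H. unfold acoef. simpl. field.
  - rewrite tech5, IHm. replace (2 * S m + 1)%nat with (S (S (2 * m + 1))) by lia.
    rewrite !tech5. pose proof (fst_s_odd (S m)) as H.
    replace (2 * S m + 1)%nat with (S (S (2 * m + 1))) in H by lia. rewrite H.
    unfold acoef. replace (S (2 * m + 1)) with (2 * S m)%nat by lia.
    rewrite <- pow_mult. unfold Rdiv; ring.
Qed.

Lemma Pser_rho x : Pser acoef (x ^ 2) (fst (RR 0 x)).
Proof.
  pose proof (Pser_RR fst n1_fst x (proj1 cchain_RR)) as H.
  intros eps He. destruct (H eps He) as [N0 HN0]. exists N0. intros m Hm.
  rewrite partial_rho. apply HN0. lia.
Qed.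

Lemma rho_eq x : PSeries acoef (x ^ 2) = fst (RR 0 x).
Proof. apply is_pseries_unique. apply is_pseries_Reals. apply Pser_rho. Qed.

Lemma n1_s k : n1 (s k) <= 2 * Sc * Kc ^ k.
Proof.
  rewrite <- RR_0. eapply Rle_trans. apply (n1_RR k 0 0). rewrite Rabs_R0; lra.
  rewrite Rmult_0_r, exp_0. right; ring.
Qed.

Lemma acoef_bound m : Rabs (acoef m) <= 2 * Sc * (Kc ^ 2) ^ m / INR (fact (2 * m)).
Proof.
  unfold acoef. rewrite Rabs_div by apply INR_fact_neq_0.
  rewrite (Rabs_right (INR (fact (2 * m)))) by (apply Rle_ge, pos_INR).
  unfold Rdiv. apply Rmult_le_compat_r. apply Rlt_le, Rinv_0_lt_compat, INR_fact_lt_0.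
  rewrite <- pow_mult. eapply Rle_trans. apply n1_fst. apply n1_s.
Qed.

Lemma inv_fact_le a b : (a <= b)%nat -> / INR (fact b) <= / INR (fact a).
Proof.
  intros H. apply Rinv_le_contravar. apply INR_fact_lt_0. apply le_INR. apply fact_le; auto.
Qed.

Lemma cv_acoef y : Rbar_lt (Rabs y) (CV_radius acoef).
Proof.
  set (rr := Rabs y + 1).
  assert (Hrr : 0 <= rr) by (unfold rr; pose proof (Rabs_pos y); lra).
  assert (HE : exists M, forall m, Rabs (acoef m * rr ^ m) <= M).
  { exists (2 * Sc * exp (Kc ^ 2 * rr)). intros m.
    rewrite Rabs_mult, (Rabs_right (rr ^ m)) by (apply Rle_ge, pow_le; auto).
    eapply Rle_trans. apply Rmult_le_compat_r. apply pow_le; auto. apply acoef_bound.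
    apply Rle_trans with (2 * Sc * ((Kc ^ 2 * rr) ^ m / INR (fact m))).
    - rewrite Rpow_mult_distr. unfold Rdiv.
      replace (2 * Sc * (Kc ^ 2) ^ m * / INR (fact (2 * m)) * rr ^ m) with
        ((2 * Sc * ((Kc ^ 2) ^ m * rr ^ m)) * / INR (fact (2 * m))) by ring.
      replace (2 * Sc * ((Kc ^ 2) ^ m * rr ^ m * / INR (fact m))) with
        ((2 * Sc * ((Kc ^ 2) ^ m * rr ^ m)) * / INR (fact m)) by ring.
      apply Rmult_le_compat_l.
      apply Rmult_le_pos. pose proof Sc_pos; lra. apply Rmult_le_pos; apply pow_le; auto.
      apply pow2_ge_0.
      apply inv_fact_le. lia.
    - apply Rmult_le_compat_l. pose proof Sc_pos; lra. apply pow_fact_le_exp.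
      apply Rmult_le_pos; auto. apply pow2_ge_0. }
  destruct (CV_radius_bounded acoef) as [Hub _]. specialize (Hub rr HE).
  destruct (CV_radius acoef); simpl in *; unfold rr in *; auto; lra.
Qed.

Definition Drho := fun k => Derive_n (PSeries acoef) k.

Lemma chain_Drho : chain Drho.
Proof.
  intros k x. apply is_derive_Reals. pose proof (ex_derive_n_PSeries (S k) acoef x (cv_acoef x)) as H.
  simpl in H. apply Derive_correct in H. exact H.
Qed.

Lemma lim_le_abs f L C : infinite_sum f L -> (forall n0, Rabs (sum_f_R0 f n0) <= C) -> Rabs L <= C.
Proof.
  intros H B. apply Rnot_lt_le. intros Hlt. set (eps := Rabs L - C).
  destruct (H eps ltac:(unfold eps; lra)) as [N0 HN]. specialize (HN N0 (le_n _)). specialize (B N0).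
  unfold R_dist in HN. pose proof (Rabs_triang_inv L (sum_f_R0 f N0)).
  rewrite Rabs_minus_sym in HN. unfold eps in HN. lra.
Qed.

Lemma Drho_bound k u T : Rabs u <= T -> Rabs (Drho k u) <= 2 * Sc * exp (Kc ^ 2 * T) * (Kc ^ 2) ^ k.
Proof.
  intros HT. unfold Drho. rewrite Derive_n_PSeries by apply cv_acoef.
  assert (Hex : ex_pseries (PS_derive_n k acoef) u).
  { apply CV_radius_inside. rewrite CV_radius_derive_n. apply cv_acoef. }
  pose proof (proj1 (is_pseries_Reals _ _ _) (PSeries_correct _ _ Hex)) as Hs.
  set (Q := Kc ^ 2). assert (HQ : 0 <= Q) by apply pow2_ge_0.
  assert (HT0 : 0 <= T) by (pose proof (Rabs_pos u); lra).
  apply (lim_le_abs _ _ _ Hs). intros m0.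
  eapply Rle_trans. apply sum_f_R0_triangle.
  apply Rle_trans with (sum_f_R0 (fun m => (/ INR (fact m) * (Q * T) ^ m) * (2 * Sc * Q ^ k)) m0).
  - apply sum_Rle. intros m _. unfold PS_derive_n.
    rewrite !Rabs_mult. rewrite Rabs_div by apply INR_fact_neq_0.
    rewrite (Rabs_right (INR (fact (m + k)))) by (apply Rle_ge, pos_INR).
    rewrite (Rabs_right (INR (fact m))) by (apply Rle_ge, pos_INR).
    pose proof (acoef_bound (m + k)) as Ha. fold Q in Ha.
    rewrite <- RPow_abs.
    assert (Hu : Rabs u ^ m <= T ^ m) by (apply pow_incr; split; [apply Rabs_pos|auto]).
    assert (Hf : INR (fact (m + k)) <= INR (fact (2 * (m + k)))) by (apply le_INR, fact_le; lia).
    pose proof (INR_fact_lt_0 m); pose proof (INR_fact_lt_0 (m + k)); pose proof (INR_fact_lt_0 (2 * (m + k))).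
    pose proof Sc_pos.
    assert (Hq : 0 <= Q ^ (m + k)) by (apply pow_le; auto).
    apply Rle_trans with (INR (fact (m + k)) / INR (fact m) * (2 * Sc * Q ^ (m + k) / INR (fact (2 * (m + k)))) * T ^ m).
    + apply Rmult_le_compat. apply Rmult_le_pos. apply Rmult_le_pos. lra. apply Rlt_le, Rinv_0_lt_compat; lra.
      apply Rabs_pos. apply pow_le, Rabs_pos.
      apply Rmult_le_compat_l; auto. apply Rmult_le_pos. lra. apply Rlt_le, Rinv_0_lt_compat; lra. auto.
    + rewrite pow_add, Rpow_mult_distr. unfold Rdiv.
      replace (INR (fact (m + k)) * / INR (fact m) * (2 * Sc * (Q ^ m * Q ^ k) * / INR (fact (2 * (m + k)))) * T ^ m)
        with ((INR (fact (m + k)) * / INR (fact (2 * (m + k)))) * (/ INR (fact m) * (Q ^ m * T ^ m) * (2 * Sc * Q ^ k))) by ring.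
      rewrite <- (Rmult_1_l (/ INR (fact m) * (Q ^ m * T ^ m) * (2 * Sc * Q ^ k))) at 2.
      apply Rmult_le_compat_r.
      apply Rmult_le_pos. apply Rmult_le_pos. apply Rlt_le, Rinv_0_lt_compat; lra.
      apply Rmult_le_pos; apply pow_le; auto. apply Rmult_le_pos. lra. apply pow_le; auto.
      apply (Rmult_le_reg_r (INR (fact (2 * (m + k))))). lra.
      rewrite Rmult_assoc, Rinv_l by lra. lra.
  - rewrite <- scal_sum. replace (2 * Sc * exp (Q * T) * Q ^ k) with ((2 * Sc * Q ^ k) * exp (Q * T)) by ring.
    apply Rmult_le_compat_l. apply Rmult_le_pos. pose proof Sc_pos; lra. apply pow_le; auto.
    apply sum_incr. exact (proj2_sig (exist_exp (Q * T))).
    intros i. apply Rmult_le_pos. apply Rlt_le, Rinv_0_lt_compat, INR_fact_lt_0. apply pow_le.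
    apply Rmult_le_pos; auto.
Qed.

Lemma rho_analytic : real_analytic (PSeries acoef).
Proof.
  intros t0. exists 1, (fun k => Drho k t0 / INR (fact k)). split; [lra|]. intros t Ht.
  set (T := Rabs t0 + 1). set (Cc := 2 * Sc * exp (Kc ^ 2 * T)).
  pose proof (taylor_chain Drho t0 (t - t0) (fun k => Cc * ((Kc ^ 2 * Rabs (t - t0)) ^ k / INR (fact k))) chain_Drho) as H.
  replace (t0 + (t - t0)) with t in H by ring. apply H.
  - apply Un_cv_scal, cv_speed_pow_fact.
  - intros k u Hu0. pose proof (between_abs t0 (t - t0) u) as Hu.
    replace (t0 + (t - t0)) with t in Hu by ring. specialize (Hu Hu0).
    assert (HuT : Rabs u <= T).
    { unfold T. replace u with (t0 + (u - t0)) by ring. eapply Rle_trans. apply Rabs_triang. lra. }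
    pose proof (Drho_bound k u T HuT) as B. fold Cc in B.
    rewrite Rpow_mult_distr. unfold Rdiv.
    assert (0 <= Rabs (t - t0) ^ k * / INR (fact k)).
    { apply Rmult_le_pos. apply pow_le, Rabs_pos. apply Rlt_le, Rinv_0_lt_compat, INR_fact_lt_0. }
    replace (Cc * ((Kc ^ 2) ^ k * Rabs (t - t0) ^ k * / INR (fact k))) with
      ((Cc * (Kc ^ 2) ^ k) * (Rabs (t - t0) ^ k * / INR (fact k))) by ring.
    rewrite Rmult_assoc. apply Rmult_le_compat_r; auto.
Qed.

Definition W k x := fst (Z k x).
Lemma W_1 j : (j < n)%nat -> W j 1 = 0.
Proof.
  intros Hj. unfold W.
  pose proof (Estep D Z (2 * n) z HD cchain_Z Z0 j ltac:(lia) 1 ltac:(unfold Icl; lra)) as E.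
  rewrite <- E. simpl. apply Hbc; auto.
Qed.

Definition Pi k t := rsum (fun i => fst (cc (2 * i)) * Xm i k t) N.
Lemma chain_Pi : chain Pi.
Proof. apply (chain_rsum (fun i => fst (cc (2 * i))) (fun i => Xm i) N). intros; apply chain_Xm. Qed.

Definition Zeta k t := Drho k t + Pi k t.
Lemma chain_Zeta : chain Zeta.
Proof.
  apply (chain_ext (fun k x => 1 * Drho k x + 1 * Pi k x)).
  apply chain_lin; [apply chain_Drho|apply chain_Pi]. intros; unfold Zeta; ring.
Qed.

Lemma rsum_extend g M d : (forall m, (M <= m)%nat -> g m = 0) -> rsum g (M + d) = rsum g M.
Proof.
  intros H. induction d. rewrite Nat.add_0_r. auto.
  rewrite Nat.add_succ_r. cbn [rsum]. rewrite IHd, (H (M + d)%nat) by lia. ring.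
Qed.
Lemma rsum_double g M : rsum g (2 * M) = rsum (fun i => g (2 * i)%nat + g (2 * i + 1)%nat) M.
Proof.
  induction M. reflexivity. replace (2 * S M)%nat with (S (S (2 * M))) by lia.
  cbn [rsum]. rewrite IHM. replace (S (2 * M)) with (2 * M + 1)%nat by lia. ring.
Qed.

Lemma W0_eq x : W 0 x = PSeries acoef (x ^ 2) + Pi 0 (x ^ 2).
Proof.
  unfold W, Z, Cadd; cbn [fst]. rewrite rho_eq. f_equal.
  unfold PP. rewrite Csum_fst.
  rewrite (rsum_ext _ (fun m => fst (cc m) * x ^ m)).
  2:{ intros j Hj. rewrite fst_mul_RtoC. unfold cc.
      replace (j <? N)%nat with true by (symmetry; apply Nat.ltb_lt; auto).
      unfold Xm. simpl ff. rewrite Nat.sub_0_r. ring. }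
  rewrite <- (rsum_extend (fun m => fst (cc m) * x ^ m) N N).
  2:{ intros m Hm. rewrite cc_big by auto. simpl. ring. }
  replace (N + N)%nat with (2 * N)%nat by lia. rewrite rsum_double.
  unfold Pi. apply rsum_ext. intros i _. rewrite fst_cc_odd.
  unfold Xm. simpl ff. rewrite Nat.sub_0_r, pow_mult. ring.
Qed.

Lemma Zeta_vanish k : (k < n)%nat -> Zeta k 1 = 0.
Proof.
  intros Hk.
  apply (Vlem 0 2 1 Hsq ltac:(lra) chain_Hsq n [([], W)] Zeta); auto.
  - intros tm [E|[]]; subst. split; [|split].
    + intros g [].
    + simpl. unfold W. exact (proj1 cchain_Z).
    + intros j Hj. simpl. unfold Hsq. simpl cs. rewrite sqrt_1. simpl. rewrite !Rmult_1_l.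
      apply W_1; auto.
  - intros k' x _. apply chain_Zeta.
  - intros t Ht. unfold sumT, termv, prodL; simpl. unfold Hsq. simpl cs. simpl pow.
    rewrite !Rmult_1_l, !Rmult_1_r, Rplus_0_r.
    rewrite W0_eq. replace (sqrt t * (sqrt t * 1)) with (sqrt t ^ 2) by (simpl; ring).
    rewrite pow2_sqrt by lra. unfold Zeta, Drho. simpl. reflexivity.
Qed.

Lemma Pi_high k : (n - p <= k)%nat -> Pi k 1 = 0.
Proof.
  intros Hk. unfold Pi. rewrite (rsum_ext _ (fun _ => 0)); [apply rsum_zero|]. intros i Hi.
  destruct (Nat.lt_ge_cases i k).
  - unfold Xm; rewrite ff_zero by auto; ring.
  - rewrite fst_cc_high by lia; ring.
Qed.

Lemma Drho_vanish k : (n - p <= k)%nat -> (k <= n - 1)%nat -> Drho k 1 = 0.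
Proof.
  intros H1 H2. pose proof (Zeta_vanish k ltac:(lia)) as H. unfold Zeta in H.
  rewrite Pi_high in H by auto. lra.
Qed.

Lemma main_concl :
  let Rf := fun x => Csum (fun j => Cmul (r j) (Cexpi (lam j) x)) (2 * p) in
  (forall x, Rf (- x) = Rf x) /\
  exists rho : R -> R,
    real_analytic rho /\
    (forall x, Rf x = RtoC (rho (x ^ 2))) /\
    exists Drho : nat -> R -> R,
      all_derivs rho Drho /\
      (forall k, (n - p <= k)%nat -> (k <= n - 1)%nat -> Drho k 1 = 0).
Proof.
  intros Rf. split.
  - intros x. unfold Rf. rewrite <- !RR0. apply Rf_even.
  - exists (PSeries acoef). split. apply rho_analytic. split.
    + intros x. unfold Rf. rewrite <- RR0. apply Cext; unfold RtoC; cbn [fst snd]. rewrite rho_eq; auto. apply Rf_snd.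
    + exists Drho. split. split. intros; reflexivity. apply chain_Drho. apply Drho_vanish.
Qed.

End Main.

Theorem mainTheorem9 (p n : nat) (Lam : R) (z : R -> R)
  (lam : nat -> Cplx) (r : nat -> Cplx) (N : nat) (c : nat -> Cplx) :
  (1 <= p)%nat -> (p < n)%nat -> 0 < Lam ->
  eigenfunction p n Lam z ->
  (forall x, Icl x -> z (- x) = z x) ->
  (* lam 0, ..., lam (2p-1) are the distinct roots of lambda^(2p) = Lam *)
  (forall j, (j < 2 * p)%nat -> Cpow (lam j) (2 * p) = RtoC Lam) ->
  (forall i j, (i < 2 * p)%nat -> (j < 2 * p)%nat -> i <> j -> lam i <> lam j) ->
  (* z = R + P on [-1,1], R = sum_j r_j e^{i lam_j x}, P = sum_{k<N} c_k x^k *)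
  (forall x, Icl x ->
     RtoC (z x) =
     Cadd (Csum (fun j => Cmul (r j) (Cexpi (lam j) x)) (2 * p))
          (Csum (fun k => Cmul (c k) (RtoC (x ^ k))) N)) ->
  let Rf := fun x => Csum (fun j => Cmul (r j) (Cexpi (lam j) x)) (2 * p) in
  (forall x, Rf (- x) = Rf x) /\
  exists rho : R -> R,
    real_analytic rho /\
    (forall x, Rf x = RtoC (rho (x ^ 2))) /\
    exists Drho : nat -> R -> R,
      all_derivs rho Drho /\
      (forall k, (n - p <= k)%nat -> (k <= n - 1)%nat -> Drho k 1 = 0).
Proof.
  intros Hp Hn HL [D [HD [Hode [Hbc _]]]] Hev Hroots Hdist Hz.
  exact (main_concl p n Lam z lam r N c D Hp Hn HL HD Hode Hbc Hev Hroots Hz).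
Qed.
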